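(* Let $(\mathcal{X}_1,\Phi_1)$ be a connected matroid that is even representable but not almost odd representable, and let $(\mathcal{X}_2,\Phi_2)$ be a connected matroid that is odd representable but not almost even representable, where $\mathcal{X}_1\cap\mathcal{X}_2=\emptyset$. Let $(\mathcal{X},\Phi)$ be their direct sum: $\mathcal{X}=\mathcal{X}_1\cup\mathcal{X}_2$ and $\Phi(\mathcal{A})=\Phi_1(\mathcal{A}\cap\mathcal{X}_1)+\Phi_2(\mathcal{A}\cap\mathcal{X}_2)$ for all $\mathcal{A}\subseteq\mathcal{X}$. Let $0<\epsilon\le\min(\Phi_1(\mathcal{X}_1),\Phi_2(\mathcal{X}_2))$ and define $\Phi^\epsilon(\mathcal{A})=\min\big(\Phi(\mathcal{A}),\ \Phi(\mathcal{X})-\epsilon\big)$ for all $\mathcal{A}\subseteq\mathcal{X}$. Then $(\mathcal{X},\Phi^\epsilon)$ is not cc-representable.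
   Context: A polymatroid $(\mathcal{X},\mathbf{h})$ is a finite ground set $\mathcal{X}=\{X_1,\dots,X_n\}$ with $\mathbf{h}:2^{\mathcal{X}}\to\mathbb{R}_{\ge0}$ satisfying $\mathbf{h}(\emptyset)=0$, monotonicity and submodularity; a matroid additionally has integer values with $\mathbf{h}(\mathcal{A})\le|\mathcal{A}|$. A matroid is connected if every two elements lie in a common circuit. The polymatroid is $q$-representable if there exist subspaces $V_1,\dots,V_n$ of a vector space over $\mathbb{F}_q$ with $\mathbf{h}(\{X_i:i\in\alpha\})=\dim\langle V_i:i\in\alpha\rangle$ for all $\alpha$; representable if $q$-representable for some $q$; even representable if $2^m$-representable for some positive integer $m$; odd representable if $p^m$-representable for some odd prime $p$ and positive integer $m$. Rank functions are vectors in $\mathbb{R}^{2^{|\mathcal{X}|}}$. A rank function is almost even (resp. almost odd) representable if it equals $\lim_{i\to\infty}c_i\mathbf{g}_i$ for some even (resp. odd) representable rank functions $\mathbf{g}_i$ on the same ground set and positive reals $c_i$. It is cc-representable if it lies in the closure of the minimal convex cone containing all representable rank functions on $\mathcal{X}$. *)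

(* Defs.v *)
From HB Require Import structures.
From mathcomp Require Import all_boot all_order all_algebra.
From mathcomp Require Import all_classical all_reals all_analysis.
Set Implicit Arguments.
Unset Strict Implicit.
Unset Printing Implicit Defensive.
Import Order.TTheory GRing.Theory Num.Theory.
Import numFieldNormedType.Exports.
Local Open Scope classical_set_scope.
Local Open Scope ring_scope.

Section Polymatroids.
Variable R : realType.
Variable T : finType.

Definition rankfun := {set T} -> R.

Definition polymatroid (h : rankfun) : Prop :=
  [/\ h finset.set0 = 0,
      (forall A, 0 <= h A),
      (forall A B : {set T}, A \subset B -> h A <= h B) &
      (forall A B : {set T}, h (A :|: B) + h (A :&: B) <= h A + h B)].

Definition matroid (h : rankfun) : Prop :=
  [/\ polymatroid h,
      (forall A, exists n : nat, h A = n%:R) &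
      (forall A, h A <= (#|A|)%:R)].

Definition dependent (h : rankfun) (A : {set T}) : Prop := h A < (#|A|)%:R.

Definition circuit (h : rankfun) (C : {set T}) : Prop :=
  dependent h C /\ (forall D : {set T}, D \proper C -> ~ dependent h D).

Definition connected_matroid (h : rankfun) : Prop :=
  matroid h /\
  (forall x y : T, x != y -> exists C, circuit h C /\ x \in C /\ y \in C).

(* q-representable: subspaces V_x (row spaces of matrices) of F^m, #|F| = q *)
Definition q_representable (h : rankfun) (q : nat) : Prop :=
  exists (F : finFieldType) (m : nat) (V : T -> 'M[F]_m),
    #|F| = q /\
    forall A : {set T}, h A = (\rank (\sum_(x in A) V x)%MS)%:R.

Definition representable (h : rankfun) : Prop :=
  exists q, q_representable h q.

Definition even_representable (h : rankfun) : Prop :=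
  exists m : nat, (0 < m)%N /\ q_representable h (2 ^ m).

Definition odd_representable (h : rankfun) : Prop :=
  exists p m : nat, [/\ prime p, odd p, (0 < m)%N & q_representable h (p ^ m)].

Definition almost_even_representable (h : rankfun) : Prop :=
  exists (c : nat -> R) (g : nat -> rankfun),
    [/\ (forall i, 0 < c i), (forall i, even_representable (g i)) &
        (forall A, (fun i => c i * g i A) @ \oo --> h A)].

Definition almost_odd_representable (h : rankfun) : Prop :=
  exists (c : nat -> R) (g : nat -> rankfun),
    [/\ (forall i, 0 < c i), (forall i, odd_representable (g i)) &
        (forall A, (fun i => c i * g i A) @ \oo --> h A)].

Definition convex_cone (C : rankfun -> Prop) : Prop :=
  (forall f g, C f -> C g -> C (fun A => f A + g A)) /\
  (forall (c : R) f, 0 <= c -> C f -> C (fun A => c * f A)).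

Definition rep_cone (h : rankfun) : Prop :=
  forall C : rankfun -> Prop, convex_cone C ->
    (forall g, representable g -> C g) -> C h.

(* closure in R^(2^|X|) (sup-metric on the finitely many coordinates) *)
Definition cc_representable (h : rankfun) : Prop :=
  forall e : R, 0 < e ->
    exists g, rep_cone g /\ forall A, `|h A - g A| < e.

End Polymatroids.

Definition direct_sum (R : realType) (T1 T2 : finType)
  (h1 : rankfun R T1) (h2 : rankfun R T2) : rankfun R (T1 + T2)%type :=
  fun A => h1 (inl @^-1: A) + h2 (inr @^-1: A).

Definition truncate (R : realType) (T : finType) (h : rankfun R T) (eps : R)
  : rankfun R T := fun A => Num.min (h A) (h finset.setT - eps).

(* Main.v *)
Require Import Defs.
From mathcomp Require Import all_boot all_order all_algebra.
From mathcomp Require Import all_classical all_reals all_analysis.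
From mathcomp Require Import ring lra.
From mathcomp Require Import finfield.
From mathcomp Require Import finset fintype.
Set Implicit Arguments.
Unset Strict Implicit.
Unset Printing Implicit Defensive.
Import Order.TTheory GRing.Theory Num.Theory.
Import numFieldNormedType.Exports.
Local Open Scope ring_scope.
Lemma matroid_nat (R : realType) (T : finType) (h : rankfun R T) :
  matroid h -> forall A, exists n : nat, h A = n%:R /\ (n <= #|A|)%N.
Proof.
case=> _ Hn Hc A; have [n hn] := Hn A; exists n; split => //.
by have := Hc A; rewrite hn ler_nat.
Qed.

Lemma indep_sub (R : realType) (T : finType) (h : rankfun R T) (I J : {set T}) :
  matroid h -> J \subset I -> h I = #|I|%:R -> h J = #|J|%:R.
Proof.
move=> hm JI hI; have [[h0 _ _ hsub] _ hc] := hm.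
have := hsub J (I :\: J).
have -> : J :|: (I :\: J) = I.
  apply/setP=> x; rewrite !inE; case: (boolP (x \in J)) => //= Hx.
  by rewrite (subsetP JI _ Hx).
have -> : J :&: (I :\: J) = set0.
  by apply/setP=> x; rewrite !inE; case: (x \in J); rewrite ?andbF.
rewrite h0 addr0 hI => H.
have HD := hc (I :\: J).
have Hcard : #|I| = (#|J| + #|I :\: J|)%N.
  by rewrite -(cardsID J I) (setIidPr JI).
have HJ := hc J.
move: H; rewrite Hcard natrD => H.
apply/eqP; rewrite eq_le HJ /=; lra.
Qed.

Lemma circuit_rank (R : realType) (T : finType) (h : rankfun R T) (C : {set T}) x :
  matroid h -> circuit h C -> x \in C ->
  h (C :\ x) = #|C :\ x|%:R /\ h C = h (C :\ x).
Proof.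
move=> hm [dC mC] xC; have [[h0 _ hmono _] _ hc] := hm.
have HI : h (C :\ x) = #|C :\ x|%:R.
  apply/eqP; rewrite eq_le hc /=.
  have := mC (C :\ x); rewrite properD1 // /dependent => H.
  by rewrite leNgt; apply/negP => /(fun p => H erefl p).
split => //.
have [n [hn _]] := matroid_nat hm C.
have Hm := hmono _ _ (subD1set C x).
move: dC; rewrite /dependent hn ltr_nat => ltn.
have cC : #|C| = #|C :\ x|.+1 by rewrite (cardsD1 x C) xC add1n.
move: Hm; rewrite HI hn ler_nat => len.
move: ltn; rewrite cC ltnS => gen.
by congr (_%:R); apply/eqP; rewrite eqn_leq gen len.
Qed.

Lemma basis_ex (R : realType) (T : finType) (h : rankfun R T) (A : {set T}) :
  matroid h -> exists B : {set T}, [/\ B \subset A, h B = #|B|%:R & h A = h B].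
Proof.
move=> hm; have [[h0 _ hmono hsub] _ hc] := hm.
have P0 : (set0 \subset A) && (h set0 == #|@set0 T|%:R) by rewrite sub0set h0 cards0 eqxx.
case: (@arg_maxnP _ set0 (fun B => (B \subset A) && (h B == #|B|%:R)) (fun B => #|B|) P0).
move=> B /andP[BA /eqP hB] Bmax.
exists B; split => //.
have Hx : forall x, x \in A -> h (x |: B) = h B.
  move=> x xA; case: (boolP (x \in B)) => xB; first by rewrite (setUidPr _) // sub1set.
  have [n [hn _]] := matroid_nat hm (x |: B).
  have cardxB : #|x |: B| = #|B|.+1 by rewrite cardsU1 xB.
  have nle : (n <= #|B|)%N.
    rewrite leqNgt; apply/negP => ltn.
    have : (#|x |: B| <= #|B|)%N.
      apply: Bmax; rewrite subUset sub1set xA BA /= hn cardxB.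
      have := hc (x |: B); rewrite hn cardxB ler_nat => nle.
      by rewrite eqr_nat eqn_leq nle ltn.
    by rewrite cardxB ltnn.
  have := hmono _ _ (subsetUr [set x] B); rewrite hn hB ler_nat => ge.
  by congr (_%:R); apply/eqP; rewrite eqn_leq nle ge.
suff H : forall k (S : {set T}), #|S| = k -> S \subset A -> h (B :|: S) = h B.
  by rewrite -(H _ A erefl (subxx A)) (setUidPr BA).
elim=> [|k IH] S cS SA.
  by move/eqP: cS; rewrite cards_eq0 => /eqP ->; rewrite setU0.
have [x xS] : exists x, x \in S.
  by apply/set0Pn; rewrite -card_gt0 cS.
have cS' : #|S :\ x| = k by move: cS; rewrite (cardsD1 x S) xS add1n => -[].
have S'A : S :\ x \subset A by apply: subset_trans SA; apply: subD1set.
have IH' := IH _ cS' S'A.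
have xA : x \in A by apply: (subsetP SA).
case: (boolP (x \in B)) => xB.
  have -> : B :|: S = B :|: (S :\ x).
    apply/setP=> y; rewrite !inE; case: (eqVneq y x) => [->|]; by rewrite ?xB ?xS.
  exact: IH'.
have E1 : (B :|: S :\ x) :|: (x |: B) = B :|: S.
  apply/setP=> y; rewrite !inE; case: (eqVneq y x) => [->|yx] /=; first by rewrite xS !orbT.
  by case: (y \in B); case: (y \in S).
have E2 : (B :|: S :\ x) :&: (x |: B) = B.
  apply/setP=> y; rewrite !inE; case: (eqVneq y x) => [->|] /=.
    by rewrite orbF andbT.
  by move=> _; case: (y \in B); rewrite ?andbF ?andbT ?orTb.
have := hsub (B :|: S :\ x) (x |: B); rewrite E1 E2 IH' (Hx _ xA) => le1.
have := hmono _ _ (subsetUl B S) => le2.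
apply/eqP; rewrite eq_le le2 andbT; lra.
Qed.
Definition mterm (R : realType) (T : finType) (P t : rankfun R T) (A B : {set T}) : R :=
  if (A \subset B) && (P A == P B) then t B - t A else 0.
Definition sterm (R : realType) (T : finType) (P t : rankfun R T) (A B : {set T}) : R :=
  if P A + P B == P (A :|: B) + P (A :&: B)
  then t A + t B - t (A :|: B) - t (A :&: B) else 0.
Definition Def (R : realType) (T : finType) (P t : rankfun R T) : R :=
  \sum_(A : {set T}) \sum_(B : {set T}) (mterm P t A B + sterm P t A B).

Lemma le_sum2 (R : realType) (T : finType) (F : {set T} -> {set T} -> R) (A0 B0 : {set T}) :
  (forall A B, 0 <= F A B) -> F A0 B0 <= \sum_(A : {set T}) \sum_(B : {set T}) F A B.
Proof.
move=> F0; rewrite (bigD1 A0) //= (bigD1 B0) //=.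
have H1 : 0 <= \sum_(B | B != B0) F A0 B by apply: sumr_ge0.
have H2 : 0 <= \sum_(A | A != A0) \sum_B F A B by apply: sumr_ge0 => A _; apply: sumr_ge0.
lra.
Qed.

Section DefLemmas.
End DefLemmas.

Lemma terms_ge0 (R : realType) (T : finType) (P t : rankfun R T) (A B : {set T}) :
  polymatroid t -> 0 <= mterm P t A B /\ 0 <= sterm P t A B.
Proof.
case=> _ _ hm hs; rewrite /mterm /sterm; split.
  by case: ifP => // /andP[AB _]; rewrite subr_ge0; apply: hm.
by case: ifP => // _; have := hs A B; lra.
Qed.

Lemma Def_ge0 (R : realType) (T : finType) (P t : rankfun R T) :
  polymatroid t -> 0 <= Def P t.
Proof.
move=> ht; apply: sumr_ge0 => A _; apply: sumr_ge0 => B _.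
have [h1 h2] := terms_ge0 P A B ht; lra.
Qed.

Lemma mgap_le (R : realType) (T : finType) (P t : rankfun R T) (A B : {set T}) :
  polymatroid t -> A \subset B -> P A = P B -> t B - t A <= Def P t.
Proof.
move=> ht AB PAB.
have : mterm P t A B + sterm P t A B <= Def P t.
  rewrite /Def; apply: (@le_sum2 R T (fun A B => mterm P t A B + sterm P t A B) A B) => A' B'.
  have [h1 h2] := terms_ge0 P A' B' ht; lra.
have [_ h2] := terms_ge0 P A B ht.
rewrite /mterm AB PAB eqxx /=; lra.
Qed.

Lemma sgap_le (R : realType) (T : finType) (P t : rankfun R T) (A B : {set T}) :
  polymatroid t -> P A + P B = P (A :|: B) + P (A :&: B) ->
  t A + t B - t (A :|: B) - t (A :&: B) <= Def P t.
Proof.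
move=> ht PAB.
have : mterm P t A B + sterm P t A B <= Def P t.
  rewrite /Def; apply: (@le_sum2 R T (fun A B => mterm P t A B + sterm P t A B) A B) => A' B'.
  have [h1 h2] := terms_ge0 P A' B' ht; lra.
have [h1 _] := terms_ge0 P A B ht.
rewrite /sterm PAB eqxx /=; lra.
Qed.

Lemma indep_bound (R : realType) (T : finType) (P t : rankfun R T) (I : {set T}) :
  matroid P -> polymatroid t -> P I = #|I|%:R ->
  0 <= \sum_(x in I) t [set x] - t I <= #|I|%:R * Def P t.
Proof.
move=> hP ht; have [h0 _ _ hs] := ht; have [[P0 _ _ _] _ _] := hP.
have D0 := Def_ge0 P ht.
move: {2}#|I| (erefl #|I|) => k; elim: k I => [|k IH] I cI PI.
  by move/eqP: cI; rewrite cards_eq0 => /eqP ->; rewrite big_set0 h0 subrr cards0 mul0r lexx.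
have [x xI] : exists x, x \in I by apply/set0Pn; rewrite -card_gt0 cI.
have cI' : #|I :\ x| = k by move: cI; rewrite (cardsD1 x I) xI add1n => -[].
have PI' : P (I :\ x) = (#|I :\ x|)%:R by apply: indep_sub hP (subD1set I x) PI.
have Px : P [set x] = 1.
  by rewrite (indep_sub hP _ PI) ?cards1 // sub1set.
have E1 : (I :\ x) :|: [set x] = I.
  apply/setP=> y; rewrite !inE; case: (eqVneq y x) => [->|] //=; by rewrite ?orbF.
have E2 : (I :\ x) :&: [set x] = set0.
  by apply/setP=> y; rewrite !inE; case: (eqVneq y x) => [->|] /=; rewrite ?eqxx ?andbF ?andbT.
have gap := sgap_le (P:=P) (A:=I :\ x) (B:=[set x]) ht.
rewrite E1 E2 PI Px PI' cI' P0 cI h0 in gap.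
have := hs (I :\ x) [set x]; rewrite E1 E2 h0 => sub.
have := IH _ cI' PI'; rewrite cI' => /andP[l1 l2].
rewrite (bigD1 x) //=.
have -> : \sum_(i in I | i != x) t [set i] = \sum_(i in I :\ x) t [set i].
  by apply: eq_bigl => y; rewrite !inE andbC.
have gap' : t (I :\ x) + t [set x] - t I - 0 <= Def P t by apply: gap; rewrite -addn1 natrD addr0.
rewrite cI -addn1 natrD mulrDl mul1r; apply/andP; split; lra.
Qed.

Lemma pair_bound (R : realType) (T : finType) (P t : rankfun R T) (x y : T) :
  connected_matroid P -> polymatroid t ->
  `|t [set x] - t [set y]| <= #|T|%:R * Def P t.
Proof.
move=> [hP hconn] ht; have D0 := Def_ge0 P ht.
case: (eqVneq x y) => [->|xy]; first by rewrite subrr normr0 mulr_ge0.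
have [C [cC [xC yC]]] := hconn x y xy.
have key : forall z, z \in C ->
  [/\ 0 <= \sum_(w in C :\ z) t [set w] - t (C :\ z) <= (#|C|.-1)%:R * Def P t,
      0 <= t C - t (C :\ z) <= Def P t &
      \sum_(w in C) t [set w] = t [set z] + \sum_(w in C :\ z) t [set w]].
  move=> z zC; have [Pi Pe] := circuit_rank hP cC zC.
  have cz : #|C :\ z| = #|C|.-1 by rewrite (cardsD1 z C) zC.
  split.
  - by rewrite -cz; apply: indep_bound.
  - apply/andP; split; first by rewrite subr_ge0; have [_ _ hm _] := ht; apply: hm; apply: subD1set.
    by apply: mgap_le => //; apply: subD1set.
  - rewrite (bigD1 z) //=; congr (_ + _); apply: eq_bigl => w; rewrite !inE andbC //.
have [/andP[a1 a2] /andP[b1 b2] e1] := key x xC.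
have [/andP[c1 c2] /andP[d1 d2] e2] := key y yC.
have cle : ((#|C|.-1).+1 <= #|T|)%N.
  by rewrite prednK ?max_card // card_gt0; apply/set0Pn; exists x.
have cle' : (#|C|.-1)%:R + 1 <= #|T|%:R :> R.
  by rewrite -[1]/(1%:R) -natrD ler_nat addn1.
have : ((#|C|.-1)%:R + 1) * Def P t <= #|T|%:R * Def P t by apply: ler_wpM2r.
rewrite ler_norml; move=> H; apply/andP; split; nra.
Qed.

Lemma close_bound (R : realType) (T : finType) (P t : rankfun R T) (x0 : T) (A : {set T}) :
  connected_matroid P -> polymatroid t ->
  `|t A - t [set x0] * P A| <= (1 + #|T|%:R + #|T|%:R * #|T|%:R) * Def P t.
Proof.
move=> hc ht; have [hP _] := hc; have D0 := Def_ge0 P ht.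
have [B [BA PB PA]] := basis_ex A hP.
have g1 : 0 <= t A - t B <= Def P t.
  apply/andP; split; first by rewrite subr_ge0; have [_ _ hm _] := ht; apply: hm.
  by apply: mgap_le.
have /andP[g2 g3] := indep_bound hP ht PB.
set n := #|T|%:R; set D := Def P t.
have g4 : `|\sum_(z in B) t [set z] - #|B|%:R * t [set x0]| <= #|B|%:R * (n * D).
  have -> : #|B|%:R * t [set x0] = \sum_(z in B) t [set x0].
    by rewrite sumr_const mulr_natl.
  rewrite -sumrB; apply: le_trans (ler_norm_sum _ _ _) _.
  have -> : #|B|%:R * (n * D) = \sum_(z in B) (n * D) by rewrite sumr_const mulr_natl.
  by apply: ler_sum => z _; apply: pair_bound.
have cB : #|B|%:R <= n by rewrite ler_nat max_card.
have cB0 : 0 <= #|B|%:R :> R by [].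
have n0 : 0 <= n by [].
rewrite PA PB.
move: g4; rewrite !ler_norml => /andP[g5 g6].
have h1 : #|B|%:R * D <= n * D by apply: ler_wpM2r.
have h2 : #|B|%:R * (n * D) <= n * (n * D) by apply: ler_wpM2r => //; apply: mulr_ge0.
have -> : (1 + n + n * n) * D = D + n * D + n * (n * D) by ring.
have h3 : 0 <= #|B|%:R * D by apply: mulr_ge0.
have h4 : 0 <= n * D by apply: mulr_ge0.
rewrite (mulrC (t [set x0])).
move/andP: g1 => [g1 g1']; rewrite /D in g5 g6 h1 h2 h3 h4 *; apply/andP; split; lra.
Qed.

Lemma Def_add (R : realType) (T : finType) (P f g : rankfun R T) :
  Def P (fun A => f A + g A) = Def P f + Def P g.
Proof.
rewrite /Def -big_split; apply: eq_bigr => A _; rewrite -big_split; apply: eq_bigr => B _ /=.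
rewrite /mterm /sterm; case: ifP => _; case: ifP => _; ring.
Qed.

Lemma Def_zero (R : realType) (T : finType) (P : rankfun R T) :
  Def P (fun _ => 0) = 0.
Proof.
rewrite /Def big1 // => A _; rewrite big1 // => B _.
rewrite /mterm /sterm; case: ifP => _; case: ifP => _; ring.
Qed.

Lemma Def_sum (R : realType) (T : finType) (X : Type) (P : rankfun R T)
  (F : X -> rankfun R T) (s : seq X) :
  Def P (fun A => \sum_(p <- s) F p A) = \sum_(p <- s) Def P (F p).
Proof.
elim: s => [|p s IH].
  rewrite big_nil; transitivity (Def P (fun _ => 0)); last exact: Def_zero.
  by congr Def; apply: boolp.funext => A; rewrite big_nil.
rewrite big_cons -IH -Def_add; congr Def; apply: boolp.funext => A; by rewrite big_cons.
Qed.

Lemma Def_bound (R : realType) (T : finType) (P f : rankfun R T) (eta : R) :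
  (forall A, `|f A - P A| <= eta) ->
  Def P f <= eta * \sum_(A : {set T}) \sum_(B : {set T}) (6 : R).
Proof.
move=> H; have e0 : 0 <= eta by have := H set0; have := normr_ge0 (f set0 - P set0); lra.

rewrite mulr_sumr; apply: ler_sum => A _; rewrite mulr_sumr; apply: ler_sum => B _.
have HA := H A; have HB := H B; have HU := H (A :|: B); have HI := H (A :&: B).
move: HA HB HU HI; rewrite !ler_norml => /andP[a1 a2] /andP[b1 b2] /andP[c1 c2] /andP[d1 d2].
rewrite /mterm /sterm; case: ifP => [/andP[_ /eqP e1]|_]; case: ifP => [/eqP e2|_]; lra.
Qed.

Local Open Scope classical_set_scope.
Local Open Scope ring_scope.

Lemma witness (R : realType) (T : finType) (P : rankfun R T) (Q : rankfun R T -> Prop) :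
  0 < P setT ->
  ~ (exists (c : nat -> R) (g : nat -> rankfun R T),
       [/\ (forall i, 0 < c i), (forall i, Q (g i)) &
           (forall A, (fun i => c i * g i A) @ \oo --> P A)]) ->
  exists2 d : R, 0 < d & forall g, Q g -> 0 < g setT ->
     exists A, d <= `|P setT / g setT * g A - P A|.
Proof.
move=> PT nal; apply: contrapT => H.
have Hn : forall n : nat, exists g, [/\ Q g, 0 < g setT &
    forall A, `|P setT / g setT * g A - P A| < n.+1%:R^-1].
  move=> n; apply: contrapT => nex; apply: H; exists n.+1%:R^-1; first by rewrite invr_gt0.
  move=> g Qg gp; apply: contrapT => nA; apply: nex; exists g; split => // A.
  rewrite ltNge; apply/negP => le; apply: nA; by exists A.
have [g Hg] := choice Hn.
apply: nal; exists (fun i => P setT / g i setT), g; split.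
- by move=> i; have [_ gp _] := Hg i; rewrite divr_gt0.
- by move=> i; have [] := Hg i.
- move=> A; apply/cvgrPdistC_lt => e e0.
  have := near_infty_natSinv_lt (PosNum e0); apply: filterS => n Hn'.
  have [_ _ Hb] := Hg n; apply: lt_trans (Hb A) Hn'.
Qed.

Lemma scale_poly (R : realType) (T : finType) (c : R) (r : rankfun R T) :
  0 <= c -> polymatroid r -> polymatroid (fun A => c * r A).
Proof.
move=> c0 [h0 hn hm hs]; split.
- by rewrite h0 mulr0.
- by move=> A; apply: mulr_ge0.
- by move=> A B AB; apply: ler_wpM2l => //; apply: hm.
- by move=> A B; rewrite -!mulrDr; apply: ler_wpM2l.
Qed.

Lemma concentration (R : realType) (T : finType) (P : rankfun R T) (Q : rankfun R T -> Prop) :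
  connected_matroid P -> 0 < P setT ->
  ~ (exists (c : nat -> R) (g : nat -> rankfun R T),
       [/\ (forall i, 0 < c i), (forall i, Q (g i)) &
           (forall A, (fun i => c i * g i A) @ \oo --> P A)]) ->
  exists M : R, 0 <= M /\
   forall (X : Type) (s : seq X) (c : X -> R) (r : X -> rankfun R T) (b : X -> bool) (eta : R),
   (forall x, 0 <= c x) -> (forall x, polymatroid (r x)) -> (forall x, b x -> Q (r x)) ->
   (forall A, `| \sum_(x <- s) c x * r x A - P A| <= eta) ->
   \sum_(x <- s | b x) c x * r x setT <= M * eta.
Proof.
move=> hc PT nal.
have [d d0 Hd] := witness PT nal.
have [x0 _] : exists x0 : T, true.
  case: (set_0Vmem (setT : {set T})) => [E|[x0 _]]; last by exists x0.
  by move: PT; rewrite E; have [[[-> _ _ _] _ _] _] := hc; rewrite ltxx.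
have [[[P0 Pn Pm _] _ _] _] := hc.
set K := 1 + #|T|%:R + #|T|%:R * #|T|%:R : R.
set L := \sum_(A : {set T}) \sum_(B : {set T}) (6 : R).
have K0 : 0 <= K by rewrite /K; apply: addr_ge0; [apply: addr_ge0|apply: mulr_ge0].
have L0 : 0 <= L by apply: sumr_ge0 => A _; apply: sumr_ge0.
set C := 2 * P setT * K / d.
have C0 : 0 <= C by rewrite /C; apply: divr_ge0; [apply: mulr_ge0 => //; apply: mulr_ge0 => //; apply: ltW | apply: ltW].
exists (C * L); split; first by apply: mulr_ge0.
move=> X s c r b eta c0 rp bQ Hclose.
pose t x := fun A => c x * r x A.
have tp : forall x, polymatroid (t x) by move=> x; apply: scale_poly.
have single : forall x, b x -> t x setT <= C * Def P (t x).
  move=> x bx; have D0 := Def_ge0 P (tp x).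
  have [tT0|tTp] := eqVneq (t x setT) 0.
    by rewrite tT0; apply: mulr_ge0.
  have tTpos : 0 < t x setT by rewrite lt_neqAle eq_sym tTp /=; have [_ hn _ _] := tp x.
  have cpos : 0 < c x.
    rewrite lt_neqAle eq_sym c0 andbT; apply/eqP => E; move: tTp; by rewrite /t E mul0r eqxx.
  have rpos : 0 < r x setT by move: tTpos; rewrite /t pmulr_rgt0.
  have [A HA] := Hd _ (bQ x bx) rpos.
  have E : P setT / r x setT * r x A = P setT * t x A / t x setT.
    rewrite /t; field; apply/andP; split; rewrite ?lt0r_neq0 //.
  rewrite E in HA.
  have b1 := close_bound x0 A hc (tp x).
  have b2 := close_bound x0 setT hc (tp x).
  rewrite -/K in b1 b2.
  have PA0 := Pn A; have PAT := Pm A setT (subsetT A).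
  have key : d * t x setT <= 2 * P setT * (K * Def P (t x)).
    have HA' : d * t x setT <= `|P setT * t x A - P A * t x setT|.
      have -> : P setT * t x A - P A * t x setT = (P setT * t x A / t x setT - P A) * t x setT.
        by field; rewrite lt0r_neq0.
      by rewrite normrM (gtr0_norm tTpos); apply: ler_wpM2r => //; apply: ltW.
    apply: le_trans HA' _.
    have -> : P setT * t x A - P A * t x setT =
      P setT * (t x A - t x [set x0]%SET * P A) - P A * (t x setT - t x [set x0]%SET * P setT) by ring.
    apply: le_trans (ler_normB _ _) _.
    rewrite !normrM (ger0_norm PA0) (ger0_norm (ltW PT)).
    have e1 : P setT * `|t x A - t x [set x0]%SET * P A| <= P setT * (K * Def P (t x)).
      by apply: ler_wpM2l => //; apply: ltW.
    have e2 : P A * `|t x setT - t x [set x0]%SET * P setT| <= P setT * (K * Def P (t x)).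
      apply: le_trans (_ : P A * (K * Def P (t x)) <= _); first by apply: ler_wpM2l.
      by apply: ler_wpM2r => //; apply: mulr_ge0.
    lra.
  have -> : C * Def P (t x) = d^-1 * (2 * P setT * (K * Def P (t x))).
    by rewrite /C; field; rewrite lt0r_neq0.
  rewrite -[t x setT](mulKf (lt0r_neq0 d0)).
  by apply: ler_wpM2l => //; rewrite invr_ge0 ltW.
have DefS : Def P (fun A => \sum_(x <- s) t x A) <= eta * L by apply: Def_bound.
rewrite (Def_sum P t s) in DefS.
apply: le_trans (_ : \sum_(x <- s | b x) C * Def P (t x) <= _).
  by apply: ler_sum => x bx; apply: single.
rewrite -mulr_sumr -mulrA [L * eta]mulrC; apply: ler_wpM2l => //.
apply: le_trans DefS; rewrite [X in _ <= X](bigID b) /= lerDl.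
by apply: sumr_ge0 => x _; apply: Def_ge0.
Qed.

Definition res (R : realType) (T1 T : finType) (f : T1 -> T) (r : rankfun R T) : rankfun R T1 :=
  fun A => r (f @: A).

Lemma res_poly (R : realType) (T1 T : finType) (f : T1 -> T) (r : rankfun R T) :
  injective f -> polymatroid r -> polymatroid (res f r).
Proof.
move=> fi [h0 hn hm hs]; rewrite /res; split.
- by rewrite imset0.
- by [].
- by move=> A B AB; apply: hm; apply: imsetS.
- by move=> A B; rewrite imsetU imsetI; [apply: hs | move=> x y _ _; apply: fi].
Qed.

Lemma res_qrep (R : realType) (T1 T : finType) (f : T1 -> T) (r : rankfun R T) q :
  injective f -> q_representable r q -> q_representable (res f r) q.
Proof.
move=> fi [F [m [V [cF HV]]]]; exists F, m, (fun x => V (f x)); split => // A.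
rewrite /res HV; congr (_%:R); congr (\rank _).
by rewrite big_imset //; move=> x y _ _; apply: fi.
Qed.

Lemma rep_poly (R : realType) (T : finType) (r : rankfun R T) :
  representable r -> polymatroid r.
Proof.
move=> [q [F [m [V [_ HV]]]]]; split.
- by rewrite HV big_set0 mxrank0.
- by move=> A; rewrite HV.
- move=> A B AB; rewrite !HV ler_nat; apply: mxrankS.
  apply/sumsmx_subP => x xA; apply: (sumsmx_sup x) => //; exact: (subsetP AB).
- move=> A B; rewrite !HV -!natrD ler_nat.
  set SA := (\sum_(x in A) V x)%MS; set SB := (\sum_(x in B) V x)%MS.
  rewrite -(mxrank_sum_cap SA SB); apply: leq_add; apply: mxrankS.
    apply/sumsmx_subP => x; rewrite inE => /orP[xA|xB].
      by apply: submx_trans (addsmxSl SA SB); apply: (sumsmx_sup x).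
    by apply: submx_trans (addsmxSr SA SB); apply: (sumsmx_sup x).
  rewrite sub_capmx; apply/andP; split; apply/sumsmx_subP => x; rewrite inE => /andP[xA xB].
    by apply: (sumsmx_sup x).
  by apply: (sumsmx_sup x).
Qed.

Lemma rep_eo (R : realType) (T : finType) (r : rankfun R T) :
  representable r -> even_representable r \/ odd_representable r.
Proof.
move=> [q [F [m [V [cF HV]]]]].
have [p pp pc] := finPcharP F.
have cardF : #|F| = (p ^ logn p #|F|)%N := card_pprimeChar pc.
set k := logn p #|F| in cardF.
have k0 : (0 < k)%N.
  rewrite lt0n; apply/negP => /eqP k0; have := card_finNzRing_gt1 F.
  by rewrite cardF k0 expn0.
have rq : q_representable r (p ^ k) by exists F, m, V; split => //; rewrite -cardF.
case: (even_prime pp) => [p2|po].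
  by left; exists k; split => //; rewrite -p2.
by right; exists p, k; split.
Qed.

Definition Item (R : realType) (T : finType) :=
  {p : R * rankfun R T | (0 <= p.1) /\ representable p.2}.

Definition cone_of (R : realType) (T : finType) (s : seq (Item R T)) : rankfun R T :=
  fun A => \sum_(p <- s) (sval p).1 * (sval p).2 A.

Definition scaleI (R : realType) (T : finType) (c : R) (hc : 0 <= c) (p : Item R T) : Item R T :=
  exist _ (c * (sval p).1, (sval p).2)
    (conj (mulr_ge0 hc (proj1 (svalP p))) (proj2 (svalP p))).

Lemma rep_cone_dec (R : realType) (T : finType) (h : rankfun R T) :
  rep_cone h -> exists s : seq (Item R T), h = cone_of s.
Proof.
move=> hc; apply: (hc (fun f => exists s, f = cone_of s)).
- split.
  + move=> f g [s1 ->] [s2 ->]; exists (s1 ++ s2); apply: boolp.funext => A.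
    by rewrite /cone_of big_cat.
  + move=> c f c0 [s ->]; exists (map (scaleI c0) s); apply: boolp.funext => A.
    rewrite /cone_of big_map mulr_sumr; apply: eq_bigr => p _ /=; by rewrite mulrA.
- move=> g hg; exists [:: exist _ (1, g) (conj ler01 hg)]; apply: boolp.funext => A.
  by rewrite /cone_of big_seq1 /= mul1r.
Qed.

Lemma pre_inl_inl (T1 T2 : finType) (A : {set T1}) :
  (@inl T1 T2) @^-1: (inl @: A) = A.
Proof.
apply/setP => x; rewrite inE; apply/imsetP/idP => [[y yA [->]] //|xA].
by exists x.
Qed.

Lemma pre_inr_inl (T1 T2 : finType) (A : {set T1}) :
  (@inr T1 T2) @^-1: (inl @: A) = set0.
Proof.
by apply/setP => x; rewrite inE in_set0; apply/imsetP => -[y _].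
Qed.

Lemma pre_inr_inr (T1 T2 : finType) (A : {set T2}) :
  (@inr T1 T2) @^-1: (inr @: A) = A.
Proof.
apply/setP => x; rewrite inE; apply/imsetP/idP => [[y yA [->]] //|xA].
by exists x.
Qed.

Lemma pre_inl_inr (T1 T2 : finType) (A : {set T2}) :
  (@inl T1 T2) @^-1: (inr @: A) = set0.
Proof.
by apply/setP => x; rewrite inE in_set0; apply/imsetP => -[y _].
Qed.

Theorem theorem5 (R : realType) (T1 T2 : finType)
  (Phi1 : rankfun R T1) (Phi2 : rankfun R T2) (eps : R) :
  connected_matroid Phi1 -> even_representable Phi1 ->
  ~ almost_odd_representable Phi1 ->
  connected_matroid Phi2 -> odd_representable Phi2 ->
  ~ almost_even_representable Phi2 ->
  0 < eps -> eps <= Num.min (Phi1 finset.setT) (Phi2 finset.setT) ->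
  ~ cc_representable (truncate (direct_sum Phi1 Phi2) eps).
Proof.
move=> c1 _ nao1 c2 _ nae2 e0; rewrite le_min => /andP[e1 e2] cc.
have P1T : 0 < Phi1 setT by apply: lt_le_trans e1.
have P2T : 0 < Phi2 setT by apply: lt_le_trans e2.
have [M1 [M10 H1]] := concentration c1 P1T nao1.
have [M2 [M20 H2]] := concentration c2 P2T nae2.
set h := truncate (direct_sum Phi1 Phi2) eps.
have [[[_ P1n P1m _] _ _] _] := c1.
have [[[_ P2n P2m _] _ _] _] := c2.
have [[[P10 _ _ _] _ _] _] := c1.
have [[[P20 _ _ _] _ _] _] := c2.
have hl : forall A : {set T1}, h (inl @: A) = Phi1 A.
  move=> A; rewrite /h /truncate /direct_sum pre_inl_inl pre_inr_inl !preimsetT P20 addr0.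
  apply: min_l; have := P1m _ _ (subsetT A); lra.
have hr : forall A : {set T2}, h (inr @: A) = Phi2 A.
  move=> A; rewrite /h /truncate /direct_sum pre_inr_inr pre_inl_inr !preimsetT P10 add0r.
  apply: min_l; have := P2m _ _ (subsetT A); lra.
have hT : h setT = Phi1 setT + Phi2 setT - eps.
  rewrite /h /truncate /direct_sum !preimsetT; apply: min_r; lra.
set e := eps / (4 + M1 + M2).
have d0 : 0 < 4 + M1 + M2 by lra.
have epos : 0 < e by apply: divr_gt0.
have ebig : eps = e * (4 + M1 + M2) by rewrite /e mulfVK // lt0r_neq0.
have [g [gc gclose]] := cc e epos.
have [s gs] := rep_cone_dec gc.
pose isodd (p : Item R (T1 + T2)%type) := `[< odd_representable (sval p).2 >].
pose c (p : Item R (T1 + T2)%type) := (sval p).1.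
have c0 : forall p, 0 <= c p by move=> p; case: (svalP p).
have rp : forall p : Item R (T1 + T2)%type, polymatroid (sval p).2.
  by move=> p; apply: rep_poly; case: (svalP p).
have S1 := H1 _ s c (fun p => res inl (sval p).2) isodd e c0.
have S2 := H2 _ s c (fun p => res inr (sval p).2) (fun p => ~~ isodd p) e c0.
have gl : forall A : {set T1}, g (inl @: A) = \sum_(p <- s) c p * res inl (sval p).2 A.
  by move=> A; rewrite gs.
have gr : forall A : {set T2}, g (inr @: A) = \sum_(p <- s) c p * res inr (sval p).2 A.
  by move=> A; rewrite gs.
have S1' : \sum_(p <- s | isodd p) c p * res inl (sval p).2 setT <= M1 * e.
  apply: S1.
  - by move=> p; apply: res_poly => //; move=> x y [].
  - move=> p /asboolP [q [m [pq oq m0 rq]]]; exists q, m; split => //.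
    by apply: res_qrep => // x y [].
  - move=> A; rewrite -gl -(hl A) distrC; apply: ltW; exact: gclose.
have S2' : \sum_(p <- s | ~~ isodd p) c p * res inr (sval p).2 setT <= M2 * e.
  apply: S2.
  - by move=> p; apply: res_poly => //; move=> x y [].
  - move=> p /asboolPn no; have := proj2 (svalP p) => /rep_eo [[m [m0 rq]]|//].
    by exists m; split => //; apply: res_qrep => // x y [].
  - move=> A; rewrite -gr -(hr A) distrC; apply: ltW; exact: gclose.
have gT : g setT = \sum_(p <- s) c p * (sval p).2 setT by rewrite gs.
have L1 : `|h (inl @: setT) - g (inl @: setT)| < e := gclose _; rewrite hl in L1.
have L2 : `|h (inr @: setT) - g (inr @: setT)| < e := gclose _; rewrite hr in L2.
have LT : `|h setT - g setT| < e := gclose _; rewrite hT in LT.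
move: L1 L2 LT; rewrite !ltr_norml => /andP[L1 L1'] /andP[L2 L2'] /andP[LT LT'].
have split1 : g (inl @: setT) = \sum_(p <- s | isodd p) c p * res inl (sval p).2 setT
   + \sum_(p <- s | ~~ isodd p) c p * res inl (sval p).2 setT by rewrite gl (bigID isodd).
have split2 : g (inr @: setT) = \sum_(p <- s | isodd p) c p * res inr (sval p).2 setT
   + \sum_(p <- s | ~~ isodd p) c p * res inr (sval p).2 setT by rewrite gr (bigID isodd).
have splitT : g setT = \sum_(p <- s | isodd p) c p * (sval p).2 setT
   + \sum_(p <- s | ~~ isodd p) c p * (sval p).2 setT by rewrite gT (bigID isodd).
have m1 : \sum_(p <- s | isodd p) c p * res inr (sval p).2 setT <=
          \sum_(p <- s | isodd p) c p * (sval p).2 setT.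
  apply: ler_sum => p _; apply: ler_wpM2l => //; have [_ _ hm _] := rp p.
  by apply: hm; apply: subsetT.
have m2 : \sum_(p <- s | ~~ isodd p) c p * res inl (sval p).2 setT <=
          \sum_(p <- s | ~~ isodd p) c p * (sval p).2 setT.
  apply: ler_sum => p _; apply: ler_wpM2l => //; have [_ _ hm _] := rp p.
  by apply: hm; apply: subsetT.
have : eps < e * (3 + M1 + M2) by nra.
rewrite ebig; have : 0 < e by []; nra.
Qed.
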